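(* Let $\mathcal{B}$ be a real uniform Banach space, $x_1,\dots,x_m\in\mathcal{B}$, and $Z=\{g\in\mathcal{B}: [g,x_i]=0\ \forall i=1,\dots,m\}$. Then for every $f_0\in\mathcal{B}$ there exists $g\in Z$ such that $(f_0+g)^*\in\operatorname{span}\{x_1^*,\dots,x_m^*\}$ and $\|f_0+g\|\le\|f_0\|$. (Note that $f_0+g$ satisfies $[f_0+g,x_i]=[f_0,x_i]$ for all $i$.)
   Context: A real Banach space $\mathcal{B}$ is called uniform if it is uniformly convex and uniformly smooth (equivalently, its norm is uniformly Fréchet differentiable). On such a space there is a unique semi-inner product inducing the norm, i.e. a unique map $[\cdot,\cdot]:\mathcal{B}\times\mathcal{B}\to\mathbb{R}$ that is linear in the first argument, satisfies $[x,x]=\|x\|^2$, $|[x,y]|^2\le[x,x][y,y]$ and $[x,\lambda y]=\lambda[x,y]$ for $\lambda\in\mathbb{R}$; it is given by $[y,x]=\|x\|\lim_{t\to0}\frac{\|x+ty\|-\|x\|}{t}$ for $x\neq0$ (and $[y,0]=0$). The duality map $x\mapsto x^*\in\mathcal{B}^*$ is defined by $x^*(y)=[y,x]$; it is an isometric bijection $\mathcal{B}\to\mathcal{B}^*$. *)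

(* Defs.v *)
From Stdlib Require Import Reals Lra ClassicalEpsilon.
Open Scope R_scope.

Record NormedSpace := {
  V :> Type;
  vadd : V -> V -> V;
  vopp : V -> V;
  vzero : V;
  vscal : R -> V -> V;
  vnorm : V -> R;
  vadd_assoc : forall x y z, vadd x (vadd y z) = vadd (vadd x y) z;
  vadd_comm : forall x y, vadd x y = vadd y x;
  vadd_zero : forall x, vadd x vzero = x;
  vadd_opp : forall x, vadd x (vopp x) = vzero;
  vscal_one : forall x, vscal 1 x = x;
  vscal_assoc : forall a b x, vscal a (vscal b x) = vscal (a * b) x;
  vscal_distr_l : forall a x y, vscal a (vadd x y) = vadd (vscal a x) (vscal a y);
  vscal_distr_r : forall a b x, vscal (a + b) x = vadd (vscal a x) (vscal b x);
  vnorm_nonneg : forall x, 0 <= vnorm x;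
  vnorm_eq0 : forall x, vnorm x = 0 -> x = vzero;
  vnorm_scal : forall a x, vnorm (vscal a x) = Rabs a * vnorm x;
  vnorm_triangle : forall x y, vnorm (vadd x y) <= vnorm x + vnorm y
}.

Arguments vadd {n}. Arguments vopp {n}. Arguments vzero {n}.
Arguments vscal {n}. Arguments vnorm {n}.

Definition vsub {E : NormedSpace} (x y : E) : E := vadd x (vopp y).

Definition complete (E : NormedSpace) : Prop :=
  forall u : nat -> E,
    (forall eps, 0 < eps -> exists N, forall n p, (N <= n)%nat -> (N <= p)%nat ->
        vnorm (vsub (u n) (u p)) < eps) ->
    exists l : E, forall eps, 0 < eps -> exists N, forall n, (N <= n)%nat ->
        vnorm (vsub (u n) l) < eps.

Definition uniformly_convex (E : NormedSpace) : Prop :=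
  forall eps, 0 < eps <= 2 -> exists delta, 0 < delta /\
    forall x y : E, vnorm x <= 1 -> vnorm y <= 1 -> eps <= vnorm (vsub x y) ->
      vnorm (vscal (/2) (vadd x y)) <= 1 - delta.

(* uniform smoothness: modulus of smoothness rho(t) = o(t) as t -> 0+,
   where rho(t) = sup { (||x+ty|| + ||x-ty||)/2 - 1 : ||x|| = ||y|| = 1 } *)
Definition uniformly_smooth (E : NormedSpace) : Prop :=
  forall eps, 0 < eps -> exists delta, 0 < delta /\
    forall (x y : E) (t : R), vnorm x = 1 -> vnorm y = 1 -> 0 < t < delta ->
      (vnorm (vadd x (vscal t y)) + vnorm (vadd x (vscal (- t) y))) / 2 - 1
        <= eps * t.

Definition uniform_banach (E : NormedSpace) : Prop :=
  complete E /\ uniformly_convex E /\ uniformly_smooth E.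

(* semi-inner product [y, x] = ||x|| * lim_{t->0} (||x + t y|| - ||x||)/t
   for x <> 0, and [y, 0] = 0. The limit is the derivative at 0 of
   t |-> ||x + t y||, chosen by epsilon (it exists in a uniform space). *)
Definition sip {E : NormedSpace} (y x : E) : R :=
  match excluded_middle_informative (x = vzero) with
  | left _ => 0
  | right _ =>
      vnorm x * epsilon (inhabits 0)
        (fun l => derivable_pt_lim (fun t => vnorm (vadd x (vscal t y))) 0 l)
  end.

Definition dual {E : NormedSpace} (x : E) : E -> R := fun y => sip y x.

Fixpoint rsum (m : nat) (f : nat -> R) : R :=
  match m with
  | O => 0
  | S k => rsum k f + f k
  end.

Definition in_dual_span {E : NormedSpace} (m : nat) (x : nat -> E) (phi : E -> R) : Prop :=
  exists c : nat -> R, forall y : E, phi y = rsum m (fun i => c i * dual (x i) y).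

(* Main.v *)
Require Import Defs.
From Stdlib Require Import Reals.
From Stdlib Require Import Lra Lia List ClassicalEpsilon Classical FunctionalExtensionality.
Open Scope R_scope.

Inductive vexp := VVar (n : nat) | VAdd (a b : vexp) | VScal (r : R) (a : vexp)
  | VOpp (a : vexp) | VZero.

Fixpoint veval {E : NormedSpace} (env : nat -> E) (e : vexp) : E :=
  match e with
  | VVar n => env n
  | VAdd a b => vadd (veval env a) (veval env b)
  | VScal r a => vscal r (veval env a)
  | VOpp a => vopp (veval env a)
  | VZero => vzero
  end.

Fixpoint vcoef (e : vexp) (n : nat) : R :=
  match e with
  | VVar k => if Nat.eqb k n then 1 else 0
  | VAdd a b => vcoef a n + vcoef b n
  | VScal r a => r * vcoef a n
  | VOpp a => - vcoef a n
  | VZero => 0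
  end.

Fixpoint vbound (e : vexp) (K : nat) : Prop :=
  match e with
  | VVar k => (k < K)%nat
  | VAdd a b => vbound a K /\ vbound b K
  | VScal _ a => vbound a K
  | VOpp a => vbound a K
  | VZero => True
  end.

Fixpoint vlc {E : NormedSpace} (env : nat -> E) (K : nat) (c : nat -> R) : E :=
  match K with
  | O => vzero
  | S k => vadd (vlc env k c) (vscal (c k) (env k))
  end.

Section Basic.
Lemma vadd_0l (E : NormedSpace) (x : E) : vadd vzero x = x.
Proof. rewrite vadd_comm; apply vadd_zero. Qed.

Lemma vadd_cancel (E : NormedSpace) (a b c : E) : vadd a b = vadd a c -> b = c.
Proof.
  intro H.
  assert (Hb : b = vadd (vadd (vopp a) a) b).
  { rewrite (vadd_comm _ (vopp a)), vadd_opp, vadd_0l; auto. }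
  rewrite Hb, <- vadd_assoc, H, vadd_assoc, (vadd_comm _ (vopp a)), vadd_opp, vadd_0l; auto.
Qed.

Lemma vscal0 (E : NormedSpace) (x : E) : vscal 0 x = vzero.
Proof.
  apply (vadd_cancel E (vscal 0 x)). rewrite vadd_zero, <- vscal_distr_r.
  f_equal; ring.
Qed.

Lemma vscal_zero (E : NormedSpace) (a : R) : vscal a (@vzero E) = vzero.
Proof.
  rewrite <- (vscal0 E vzero) at 1. rewrite vscal_assoc. replace (a*0) with 0 by ring.
  apply vscal0.
Qed.

Lemma vopp_scal (E : NormedSpace) (x : E) : vopp x = vscal (-1) x.
Proof.
  apply (vadd_cancel E x). rewrite vadd_opp.
  rewrite <- (vscal_one E x) at 1. rewrite <- vscal_distr_r.
  replace (1 + -1) with 0 by ring. symmetry; apply vscal0.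
Qed.

Lemma vnorm_zero (E : NormedSpace) : vnorm (@vzero E) = 0.
Proof. rewrite <- (vscal0 E vzero), vnorm_scal, Rabs_R0; ring. Qed.

Lemma vnorm_opp (E : NormedSpace) (x : E) : vnorm (vopp x) = vnorm x.
Proof. rewrite vopp_scal, vnorm_scal, Rabs_left by lra; ring. Qed.

Lemma vlc_add (E : NormedSpace) env K (c d : nat -> R) :
  @vlc E env K (fun n => c n + d n) = vadd (vlc env K c) (vlc env K d).
Proof.
  induction K; simpl. { rewrite vadd_zero; auto. }
  rewrite IHK, vscal_distr_r.
  rewrite <- !vadd_assoc. f_equal. rewrite !vadd_assoc. f_equal. apply vadd_comm.
Qed.

Lemma vlc_scal (E : NormedSpace) env K r (c : nat -> R) :
  @vlc E env K (fun n => r * c n) = vscal r (vlc env K c).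
Proof.
  induction K; simpl. { rewrite vscal_zero; auto. }
  rewrite IHK, vscal_distr_l, vscal_assoc; auto.
Qed.

Lemma vlc_zero (E : NormedSpace) env K : @vlc E env K (fun _ => 0) = vzero.
Proof. induction K; simpl; auto. rewrite IHK, vscal0, vadd_zero; auto. Qed.

Lemma vlc_var (E : NormedSpace) env K k : (k < K)%nat ->
  @vlc E env K (fun n => if Nat.eqb k n then 1 else 0) = env k.
Proof.
  induction K; intro H; [lia|]. simpl.
  destruct (Nat.eqb k K) eqn:Ek.
  - apply Nat.eqb_eq in Ek; subst.
    replace (vlc env K (fun n => if Nat.eqb K n then 1 else 0)) with (@vzero E).
    + rewrite vadd_0l, vscal_one; auto.
    + rewrite <- (vlc_zero E env K). clear. assert (forall j, (j <= K)%nat ->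
        vlc env j (fun _ => 0) = vlc env j (fun n => if Nat.eqb K n then 1 else 0)).
      { induction j; intros; simpl; auto. rewrite IHj by lia.
        destruct (Nat.eqb K j) eqn:Ej; auto. apply Nat.eqb_eq in Ej; lia. }
      apply H; lia.
  - apply Nat.eqb_neq in Ek. rewrite IHK by lia. rewrite vscal0, vadd_zero; auto.
Qed.

Lemma vlc_ext (E : NormedSpace) env K (c d : nat -> R) :
  (forall n, (n < K)%nat -> c n = d n) -> @vlc E env K c = vlc env K d.
Proof.
  induction K; intros H; simpl; auto. rewrite IHK by (intros; apply H; lia).
  rewrite H by lia; auto.
Qed.

Lemma veval_lc (E : NormedSpace) env K e : vbound e K ->
  @veval E env e = vlc env K (vcoef e).
Proof.
  induction e; simpl; intro Hb.
  - symmetry; apply vlc_var; auto.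
  - destruct Hb. rewrite IHe1, IHe2, <- vlc_add by auto. auto.
  - rewrite IHe, <- vlc_scal by auto. auto.
  - rewrite IHe by auto. rewrite vopp_scal, <- vlc_scal.
    apply vlc_ext; intros; ring.
  - symmetry; apply vlc_zero.
Qed.

Lemma veval_eq (E : NormedSpace) env K e1 e2 : vbound e1 K -> vbound e2 K ->
  (forall n, (n < K)%nat -> vcoef e1 n = vcoef e2 n) ->
  @veval E env e1 = veval env e2.
Proof.
  intros H1 H2 H. rewrite (veval_lc E env K e1), (veval_lc E env K e2) by auto.
  apply vlc_ext; auto.
Qed.
End Basic.

Ltac reify a b c t :=
  lazymatch t with
  | vadd ?u ?v => let r1 := reify a b c u in let r2 := reify a b c v in constr:(VAdd r1 r2)
  | vsub ?u ?v => let r1 := reify a b c u in let r2 := reify a b c v in constr:(VAdd r1 (VOpp r2))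
  | vscal ?k ?u => let r := reify a b c u in constr:(VScal k r)
  | vopp ?u => let r := reify a b c u in constr:(VOpp r)
  | vzero => constr:(VZero)
  | _ => lazymatch constr:((t, a, b, c)) with
         | (?x, ?x, _, _) => constr:(VVar 0)
         | (?x, _, ?x, _) => constr:(VVar 1)
         | (?x, _, _, ?x) => constr:(VVar 2)
         end
  end.

Ltac vid a b c :=
  lazymatch goal with
  | |- @eq _ ?L ?R =>
    let l := reify a b c L in let r := reify a b c R in
    change (veval (fun n => nth n (a :: b :: c :: nil) a) l =
            veval (fun n => nth n (a :: b :: c :: nil) a) r);
    apply (veval_eq _ _ 3); [simpl; repeat split; lia | simpl; repeat split; lia |
      let n := fresh "n" in let Hn := fresh "Hn" in intros n Hn;
      destruct n as [|[|[|n]]]; [simpl | simpl | simpl | lia]]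
  end.



Lemma div_le (a b s t : R) : 0 < s -> 0 < t -> a * t <= b * s -> a / s <= b / t.
Proof.
  intros Hs Ht H.
  replace (a/s) with ((a*t) * / (s*t)) by (field; lra).
  replace (b/t) with ((b*s) * / (s*t)) by (field; lra).
  apply Rmult_le_compat_r; auto. left; apply Rinv_0_lt_compat; nra.
Qed.

Lemma vnorm_pos (E : NormedSpace) (x : E) : x <> vzero -> 0 < vnorm x.
Proof.
  intro H. destruct (vnorm_nonneg E x) as [|H0]; auto. exfalso; apply H, vnorm_eq0; auto.
Qed.

Lemma smooth_gen (E : NormedSpace) (US : uniformly_smooth E) (x y : E) :
  x <> vzero -> forall eps, 0 < eps -> exists delta, 0 < delta /\
  forall t, 0 < t < delta ->
    vnorm (vadd x (vscal t y)) + vnorm (vadd x (vscal (-t) y)) - 2 * vnorm x <= eps * t.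
Proof.
  intros Hx eps He.
  destruct (classic (y = vzero)) as [Hy|Hy].
  { subst. exists 1; split; [lra|]. intros t Ht. rewrite !vscal_zero, vadd_zero. nra. }
  pose proof (vnorm_pos E x Hx) as Nx. pose proof (vnorm_pos E y Hy) as Ny.
  destruct (US (eps / (2 * vnorm y))) as [d [Hd HU]].
  { apply Rdiv_lt_0_compat; lra. }
  exists (d * vnorm x / vnorm y); split.
  { apply Rdiv_lt_0_compat; nra. }
  intros t Ht.
  set (s := t * vnorm y / vnorm x).
  assert (Hs : 0 < s < d).
  { unfold s; split. apply Rdiv_lt_0_compat; nra.
    destruct Ht as [_ Ht]. apply (Rmult_lt_compat_r (vnorm y / vnorm x)) in Ht;
    [|apply Rdiv_lt_0_compat; lra].
    replace (d * vnorm x / vnorm y * (vnorm y / vnorm x)) with d in Ht by (field; lra).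
    replace (t * vnorm y / vnorm x) with (t * (vnorm y / vnorm x)) by (field; lra). lra. }
  set (u := vscal (/ vnorm x) x). set (v := vscal (/ vnorm y) y).
  assert (Hu : vnorm u = 1).
  { unfold u; rewrite vnorm_scal, Rabs_right; [field; lra|]. left; apply Rinv_0_lt_compat; lra. }
  assert (Hv : vnorm v = 1).
  { unfold v; rewrite vnorm_scal, Rabs_right; [field; lra|]. left; apply Rinv_0_lt_compat; lra. }
  specialize (HU u v s Hu Hv Hs).
  assert (E1 : vadd x (vscal t y) = vscal (vnorm x) (vadd u (vscal s v))).
  { unfold u, v, s. vid x y y; field; lra. }
  assert (E2 : vadd x (vscal (-t) y) = vscal (vnorm x) (vadd u (vscal (-s) v))).
  { unfold u, v, s. vid x y y; field; lra. }
  rewrite E1, E2, !vnorm_scal, Rabs_right by lra.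
  assert (H2 : vnorm (vadd u (vscal s v)) + vnorm (vadd u (vscal (- s) v)) - 2
     <= 2 * (eps / (2 * vnorm y)) * s) by lra.
  apply (Rmult_le_compat_l (vnorm x)) in H2; [|lra].
  replace (vnorm x * (2 * (eps / (2 * vnorm y)) * s)) with (eps * t) in H2
    by (unfold s; field; lra).
  lra.
Qed.

Lemma dq_near (f : R -> R) (l eps : R) : derivable_pt_lim f 0 l -> 0 < eps ->
  exists d, 0 < d /\ forall h, h <> 0 -> Rabs h < d -> Rabs ((f h - f 0) / h - l) < eps.
Proof.
  intros H He. destruct (H eps He) as [d Hd]. exists d; split; [apply cond_pos|].
  intros h Hh Hhd. specialize (Hd h Hh Hhd). rewrite Rplus_0_l in Hd; auto.
Qed.

Lemma deriv_le (f g : R -> R) (lf lg : R) : derivable_pt_lim f 0 lf ->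
  derivable_pt_lim g 0 lg -> f 0 = g 0 -> (forall t, 0 < t -> f t <= g t) -> lf <= lg.
Proof.
  intros Hf Hg E0 Hle. destruct (Rle_or_lt lf lg) as [|Hlt]; auto. exfalso.
  set (e := (lf - lg) / 2).
  destruct (dq_near f lf e Hf) as [d1 [Hd1 H1]]; [unfold e; lra|].
  destruct (dq_near g lg e Hg) as [d2 [Hd2 H2]]; [unfold e; lra|].
  set (h := Rmin d1 d2 / 2).
  assert (Hh : 0 < h) by (unfold h; apply Rmin_case; lra).
  assert (Hh1 : Rabs h < d1) by (rewrite Rabs_right by lra; unfold h;
    pose proof (Rmin_l d1 d2); lra).
  assert (Hh2 : Rabs h < d2) by (rewrite Rabs_right by lra; unfold h;
    pose proof (Rmin_r d1 d2); lra).
  specialize (H1 h ltac:(lra) Hh1). specialize (H2 h ltac:(lra) Hh2).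
  apply Rabs_def2 in H1. apply Rabs_def2 in H2.
  assert ((f h - f 0) / h <= (g h - g 0) / h).
  { apply Rmult_le_compat_r. left; apply Rinv_0_lt_compat; auto. specialize (Hle h Hh); lra. }
  unfold e in *; lra.
Qed.

Lemma affine_deriv (c k : R) : derivable_pt_lim (fun t => c + t * k) 0 k.
Proof.
  intros eps He. exists (mkposreal eps He). intros h Hh _.
  replace ((c + (0 + h) * k - (c + 0 * k)) / h - k) with 0 by (field; auto).
  rewrite Rabs_R0; auto.
Qed.

Lemma deriv_exists (E : NormedSpace) (US : uniformly_smooth E) (x y : E) :
  x <> vzero -> exists l, derivable_pt_lim (fun t => vnorm (vadd x (vscal t y))) 0 l.
Proof.
  intro Hx.
  set (phi := fun t => vnorm (vadd x (vscal t y))).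
  assert (P0 : phi 0 = vnorm x) by (unfold phi; rewrite vscal0, vadd_zero; auto).
  set (q := fun t => (phi t - vnorm x) / t).
  assert (F1 : forall s t, 0 < s -> s <= t -> q s <= q t).
  { intros s t Hs Hst. unfold q. apply div_le; try lra.
    assert (Hc : phi s <= (1 - s/t) * vnorm x + (s/t) * phi t).
    { unfold phi.
      replace (vadd x (vscal s y)) with
        (vadd (vscal (1 - s/t) x) (vscal (s/t) (vadd x (vscal t y)))) by (vid x y y; field; lra).
      eapply Rle_trans; [apply vnorm_triangle|]. rewrite !vnorm_scal.
      rewrite (Rabs_right (1 - s/t)), (Rabs_right (s/t)); [lra| |].
      - left; apply Rdiv_lt_0_compat; lra.
      - apply Rle_ge. assert (s/t <= 1) by (apply Rmult_le_reg_r with t; [lra|];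
          field_simplify; lra). lra. }
    assert (phi s - vnorm x <= (s/t) * (phi t - vnorm x)) by lra.
    apply (Rmult_le_compat_r t) in H; [|lra].
    replace (s / t * (phi t - vnorm x) * t) with ((phi t - vnorm x) * s) in H by (field; lra).
    lra. }
  assert (F2 : forall t, 0 < t -> - vnorm y <= q t).
  { intros t Ht. unfold q.
    assert (vnorm x <= phi t + t * vnorm y).
    { unfold phi. replace x with (vadd (vadd x (vscal t y)) (vscal (-t) y)) at 1
        by (vid x y y; field).
      eapply Rle_trans; [apply vnorm_triangle|]. rewrite vnorm_scal, Rabs_left1 by lra. lra. }
    replace (- vnorm y) with ((- t * vnorm y) / t) by (field; lra).
    apply Rmult_le_compat_r; [left; apply Rinv_0_lt_compat; lra| lra]. }
  assert (F3 : forall t, 0 < t -> q (-t) <= q t).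
  { intros t Ht. unfold q.
    assert (2 * vnorm x <= phi t + phi (-t)).
    { unfold phi. replace x with (vscal (/2) (vadd (vadd x (vscal t y)) (vadd x (vscal (-t) y))))
        at 1 by (vid x y y; field).
      rewrite vnorm_scal, Rabs_right by lra.
      pose proof (vnorm_triangle E (vadd x (vscal t y)) (vadd x (vscal (-t) y))). lra. }
    replace ((phi (- t) - vnorm x) / - t) with ((vnorm x - phi (-t)) / t) by (field; lra).
    apply Rmult_le_compat_r; [left; apply Rinv_0_lt_compat; lra| lra]. }
  set (A := fun r => exists t, 0 < t /\ r = - q t).
  destruct (completeness A) as [m [Hub Hlub]].
  { exists (vnorm y). intros r [t [Ht ->]]. specialize (F2 t Ht). lra. }
  { exists (- q 1). exists 1; split; auto; lra. }
  exists (- m).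
  assert (I1 : forall t, 0 < t -> - m <= q t).
  { intros t Ht. assert (- q t <= m) by (apply Hub; exists t; auto). lra. }
  assert (I2 : forall e, 0 < e -> exists t, 0 < t /\ q t < - m + e).
  { intros e He. apply NNPP; intro Hn.
    assert (m <= m - e); [|lra]. apply Hlub. intros r [t [Ht ->]].
    destruct (Rle_or_lt (q t) (-m + e)) as [Hq|Hq].
    - destruct Hq as [Hq|Hq]. exfalso; apply Hn; exists t; auto.
      lra.
    - lra. }
  intros eps He.
  destruct (I2 eps He) as [t0 [Ht0 Hq0]].
  destruct (smooth_gen E US x y Hx (eps/2)) as [ds [Hds HS]]; [lra|].
  assert (Hd : 0 < Rmin t0 ds) by (apply Rmin_case; lra).
  exists (mkposreal _ Hd). simpl. intros h Hh Hhd. rewrite Rplus_0_l.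
  change (Rabs ((phi h - phi 0) / h - - m) < eps). rewrite P0. fold (q h).
  pose proof (Rmin_l t0 ds). pose proof (Rmin_r t0 ds).
  destruct (Rle_or_lt 0 h) as [Hp|Hn].
  - assert (0 < h) by lra. rewrite Rabs_right in Hhd by lra.
    specialize (I1 h H1). specialize (F1 h t0 H1 ltac:(lra)).
    apply Rabs_def1; lra.
  - rewrite Rabs_left in Hhd by lra. set (t := -h).
    assert (Ht : 0 < t) by (unfold t; lra).
    replace h with (-t) by (unfold t; ring).
    specialize (I1 t Ht). specialize (F1 t t0 Ht ltac:(unfold t; lra)).
    specialize (F3 t Ht).
    specialize (HS t ltac:(unfold t; lra)).
    assert (q t - q (-t) <= eps / 2).
    { unfold q. replace ((phi t - vnorm x) / t - (phi (- t) - vnorm x) / - t)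
        with ((phi t + phi (-t) - 2 * vnorm x) / t) by (field; lra).
      replace (eps/2) with ((eps / 2 * t) / t) by (field; lra).
      apply Rmult_le_compat_r; [left; apply Rinv_0_lt_compat; lra|]. exact HS. }
    apply Rabs_def1; lra.
Qed.


Definition Dv {E : NormedSpace} (x y : E) : R :=
  epsilon (inhabits 0)
    (fun l => derivable_pt_lim (fun t => vnorm (vadd x (vscal t y))) 0 l).

Lemma Dv_spec (E : NormedSpace) (US : uniformly_smooth E) (x y : E) : x <> vzero ->
  derivable_pt_lim (fun t => vnorm (vadd x (vscal t y))) 0 (Dv x y).
Proof.
  intro Hx. unfold Dv. apply epsilon_spec. apply deriv_exists; auto.
Qed.

Lemma sip_eq (E : NormedSpace) (x y : E) : x <> vzero -> sip y x = vnorm x * Dv x y.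
Proof.
  intro Hx. unfold sip. destruct (excluded_middle_informative (x = vzero)); [contradiction|].
  reflexivity.
Qed.

Lemma sip_x0 (E : NormedSpace) (y : E) : sip y vzero = 0.
Proof. unfold sip. destruct (excluded_middle_informative _); auto. exfalso; auto. Qed.

Lemma Dv_scal (E : NormedSpace) (US : uniformly_smooth E) (x y : E) a : x <> vzero ->
  Dv x (vscal a y) = a * Dv x y.
Proof.
  intro Hx.
  assert (H : derivable_pt_lim (fun t => vnorm (vadd x (vscal t y))) ((fun t => 0 + t * a) 0) (Dv x y)).
  { replace ((fun t => 0 + t * a) 0) with 0 by ring. apply Dv_spec; auto. }
  pose proof (derivable_pt_lim_comp _ _ _ _ _ (affine_deriv 0 a) H) as Hc.
  replace (comp (fun t => vnorm (vadd x (vscal t y))) (fun t => 0 + t * a))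
    with (fun t => vnorm (vadd x (vscal t (vscal a y)))) in Hc.
  - rewrite (uniqueness_limite _ _ _ _ (Dv_spec E US x (vscal a y) Hx) Hc). ring.
  - apply functional_extensionality; intro t. unfold comp. f_equal. vid x y y; ring.
Qed.

Lemma Dv_add_le (E : NormedSpace) (US : uniformly_smooth E) (x y z : E) : x <> vzero ->
  Dv x (vadd y z) <= Dv x y + Dv x z.
Proof.
  intro Hx.
  pose proof (derivable_pt_lim_scal _ (/2) _ _ (derivable_pt_lim_plus _ _ _ _ _
    (Dv_spec E US x (vscal 2 y) Hx) (Dv_spec E US x (vscal 2 z) Hx))) as Hg.
  rewrite !Dv_scal in Hg by auto.
  replace (Dv x y + Dv x z) with (/ 2 * (2 * Dv x y + 2 * Dv x z)) by field.
  eapply deriv_le; [apply Dv_spec; auto | exact Hg | |].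
  - unfold mult_real_fct, plus_fct. rewrite !vscal0, !vadd_zero. field.
  - intros t Ht. unfold mult_real_fct, plus_fct.
    replace (vadd x (vscal t (vadd y z))) with
      (vadd (vscal (/2) (vadd x (vscal t (vscal 2 y)))) (vscal (/2) (vadd x (vscal t (vscal 2 z)))))
      by (vid x y z; field).
    eapply Rle_trans; [apply vnorm_triangle|]. rewrite !vnorm_scal, Rabs_right by lra. lra.
Qed.

Lemma Dv_add (E : NormedSpace) (US : uniformly_smooth E) (x y z : E) : x <> vzero ->
  Dv x (vadd y z) = Dv x y + Dv x z.
Proof.
  intro Hx. apply Rle_antisym; [apply Dv_add_le; auto|].
  pose proof (Dv_add_le E US x (vscal (-1) y) (vscal (-1) z) Hx).
  rewrite <- vscal_distr_l, !Dv_scal in H by auto. lra.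
Qed.

Lemma Dv_le (E : NormedSpace) (US : uniformly_smooth E) (x y : E) : x <> vzero ->
  Dv x y <= vnorm y.
Proof.
  intro Hx. eapply deriv_le; [apply Dv_spec; auto | apply (affine_deriv (vnorm x)) | |].
  - simpl. rewrite vscal0, vadd_zero. ring.
  - intros t Ht. eapply Rle_trans; [apply vnorm_triangle|]. rewrite vnorm_scal, Rabs_right by lra.
    lra.
Qed.

Lemma sip_add (E : NormedSpace) (US : uniformly_smooth E) (x y z : E) :
  sip (vadd y z) x = sip y x + sip z x.
Proof.
  destruct (classic (x = vzero)) as [->|Hx]. { rewrite !sip_x0; ring. }
  rewrite !sip_eq, Dv_add by auto. ring.
Qed.

Lemma sip_scal (E : NormedSpace) (US : uniformly_smooth E) (x y : E) a :
  sip (vscal a y) x = a * sip y x.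
Proof.
  destruct (classic (x = vzero)) as [->|Hx]. { rewrite !sip_x0; ring. }
  rewrite !sip_eq, Dv_scal by auto. ring.
Qed.

Lemma sip_bound (E : NormedSpace) (US : uniformly_smooth E) (x y : E) :
  Rabs (sip y x) <= vnorm x * vnorm y.
Proof.
  destruct (classic (x = vzero)) as [->|Hx]. { rewrite !sip_x0, Rabs_R0, vnorm_zero; lra. }
  rewrite sip_eq by auto. rewrite Rabs_mult, (Rabs_right (vnorm x)) by (apply Rle_ge, vnorm_nonneg).
  apply Rmult_le_compat_l; [apply vnorm_nonneg|].
  pose proof (Dv_le E US x y Hx). pose proof (Dv_le E US x (vscal (-1) y) Hx).
  rewrite Dv_scal, vnorm_scal, Rabs_left in H0 by (auto; lra).
  apply Rabs_le; lra.
Qed.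


Definition rlinear {E : NormedSpace} (f : E -> R) : Prop :=
  (forall u v, f (vadd u v) = f u + f v) /\ (forall a u, f (vscal a u) = a * f u).

Lemma rsum_ext (m : nat) (f g : nat -> R) : (forall i, (i < m)%nat -> f i = g i) ->
  rsum m f = rsum m g.
Proof.
  induction m; intros H; simpl; auto. rewrite IHm by (intros; apply H; lia). rewrite H by lia; auto.
Qed.

Lemma span_lemma (E : NormedSpace) (m : nat) (psi : nat -> E -> R) :
  (forall i, rlinear (psi i)) -> forall phi : E -> R, rlinear phi ->
  (forall y, (forall i, (i < m)%nat -> psi i y = 0) -> phi y = 0) ->
  exists c : nat -> R, forall y, phi y = rsum m (fun i => c i * psi i y).
Proof.
  intros Hpsi. induction m; intros phi Hphi Hv.
  - exists (fun _ => 0). intros y. simpl. apply Hv. intros; lia.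
  - destruct (classic (forall y, (forall i, (i < m)%nat -> psi i y = 0) -> psi m y = 0)) as [Hc|Hc].
    + destruct (IHm phi Hphi) as [c Hcc].
      { intros y Hy. apply Hv. intros i Hi. destruct (Nat.eq_dec i m) as [->|]; auto.
        apply Hy; lia. }
      exists (fun i => if Nat.eqb i m then 0 else c i). intros y. simpl.
      rewrite Nat.eqb_refl, Hcc. rewrite (rsum_ext m (fun i => (if Nat.eqb i m then _ else c i) * psi i y) (fun i => c i * psi i y)). ring.
      intros i Hi. destruct (Nat.eqb i m) eqn:Ei; auto. apply Nat.eqb_eq in Ei; lia.
    + apply not_all_ex_not in Hc. destruct Hc as [y0 Hy0].
      apply imply_to_and in Hy0. destruct Hy0 as [Hy0 Hm0].
      set (k := phi y0 / psi m y0).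
      destruct (IHm (fun y => phi y - k * psi m y)) as [c Hcc].
      { destruct Hphi as [Pa Ps]. destruct (Hpsi m) as [Qa Qs]. split.
        - intros u v. rewrite Pa, Qa. ring.
        - intros a u. rewrite Ps, Qs. ring. }
      { intros y Hy.
        set (w := vadd y (vscal (- (psi m y / psi m y0)) y0)).
        assert (Hw : phi w = 0).
        { apply Hv. intros i Hi. unfold w. destruct (Hpsi i) as [Qa Qs].
          rewrite Qa, Qs. destruct (Nat.eq_dec i m) as [->|Hne].
          - field; auto.
          - assert (i < m)%nat by lia. rewrite (Hy i), (Hy0 i) by auto. ring. }
        unfold w in Hw. destruct Hphi as [Pa Ps]. rewrite Pa, Ps in Hw.
        assert (Hq : phi y = psi m y / psi m y0 * phi y0) by lra.
        rewrite Hq. unfold k. field; auto. }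
      exists (fun i => if Nat.eqb i m then k else c i). intros y. simpl.
      rewrite Nat.eqb_refl. rewrite (rsum_ext m (fun i => (if Nat.eqb i m then _ else c i) * psi i y) (fun i => c i * psi i y)).
      * rewrite <- Hcc. ring.
      * intros i Hi. destruct (Nat.eqb i m) eqn:Ei; auto. apply Nat.eqb_eq in Ei; lia.
Qed.


Lemma rsum_zero (m : nat) : rsum m (fun _ => 0) = 0.
Proof. induction m; simpl; auto. rewrite IHm; ring. Qed.

Lemma small_zero (a : R) : (forall e, 0 < e -> Rabs a < e) -> a = 0.
Proof.
  intro H. destruct (Req_dec a 0) as [|Ha]; auto. exfalso.
  specialize (H (Rabs a) (Rabs_pos_lt a Ha)). lra.
Qed.

Lemma small_le (a b : R) : (forall e, 0 < e -> a < b + e) -> a <= b.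
Proof.
  intro H. destruct (Rle_or_lt a b) as [|Hl]; auto. specialize (H (a - b) ltac:(lra)). lra.
Qed.

Lemma arch_inv (e : R) : 0 < e -> exists N : nat, / (INR N + 1) < e.
Proof.
  intro He. destruct (INR_archimed e 1 He) as [N HN]. exists N.
  pose proof (pos_INR N).
  apply Rmult_lt_reg_r with (INR N + 1); [lra|]. rewrite Rinv_l by lra. nra.
Qed.

Lemma inv_mono (N n : nat) : (N <= n)%nat -> / (INR n + 1) <= / (INR N + 1).
Proof.
  intro H. apply Rinv_le_contravar. pose proof (pos_INR N); lra.
  apply le_INR in H. lra.
Qed.

Lemma inv_pos (n : nat) : 0 < / (INR n + 1).
Proof. apply Rinv_0_lt_compat. pose proof (pos_INR n); lra. Qed.

Theorem mainTheorem10 (E : NormedSpace) (HE : uniform_banach E)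
  (m : nat) (x : nat -> E) (f0 : E) :
  exists g : E,
    (forall i, (i < m)%nat -> sip g (x i) = 0) /\
    in_dual_span m x (dual (vadd f0 g)) /\
    vnorm (vadd f0 g) <= vnorm f0.
Proof.
  destruct HE as [HC [UC US]].
  set (inZ := fun g : E => forall i, (i < m)%nat -> sip g (x i) = 0).
  assert (Z0 : inZ vzero).
  { intros i Hi. rewrite <- (vscal0 E vzero), sip_scal by auto. ring. }
  assert (ZA : forall a b, inZ a -> inZ b -> inZ (vadd a b)).
  { intros a b Ha Hb i Hi. rewrite sip_add, Ha, Hb by auto. ring. }
  assert (ZS : forall k a, inZ a -> inZ (vscal k a)).
  { intros k a Ha i Hi. rewrite sip_scal, Ha by auto. ring. }
  set (A := fun r => exists g, inZ g /\ r = - vnorm (vadd f0 g)).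
  destruct (completeness A) as [m0 [Hub Hlub]].
  { exists 0. intros r [g [_ ->]]. pose proof (vnorm_nonneg E (vadd f0 g)). lra. }
  { exists (- vnorm (vadd f0 vzero)). exists vzero; auto. }
  set (d := - m0).
  assert (D1 : forall g, inZ g -> d <= vnorm (vadd f0 g)).
  { intros g Hg. assert (- vnorm (vadd f0 g) <= m0) by (apply Hub; exists g; auto).
    unfold d; lra. }
  assert (D2 : forall e, 0 < e -> exists g, inZ g /\ vnorm (vadd f0 g) < d + e).
  { intros e He. apply NNPP; intro Hn.
    assert (m0 <= m0 - e); [|lra]. apply Hlub. intros r [g [Hg ->]].
    destruct (Rlt_or_le (vnorm (vadd f0 g)) (d + e)) as [Hq|Hq].
    - exfalso; apply Hn; exists g; auto.
    - unfold d in Hq; lra. }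
  assert (Dpos : 0 <= d).
  { assert (m0 <= 0); [|unfold d; lra]. apply Hlub. intros r [g [_ ->]].
    pose proof (vnorm_nonneg E (vadd f0 g)). lra. }
  set (gs := fun n : nat => epsilon (inhabits vzero)
    (fun g => inZ g /\ vnorm (vadd f0 g) < d + / (INR n + 1))).
  assert (GS : forall n, inZ (gs n) /\ vnorm (vadd f0 (gs n)) < d + / (INR n + 1)).
  { intro n. unfold gs. apply epsilon_spec. apply D2, inv_pos. }
  set (hs := fun n => vadd f0 (gs n)).
  assert (Cauchy : forall eps, 0 < eps -> exists N, forall n p, (N <= n)%nat -> (N <= p)%nat ->
        vnorm (vsub (hs n) (hs p)) < eps).
  { intros eps He. destruct Dpos as [Dp|D0].
    - set (eps' := Rmin (eps / (d + 1)) 2).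
      assert (He' : 0 < eps' <= 2).
      { unfold eps'. split. apply Rmin_case; [apply Rdiv_lt_0_compat|]; lra. apply Rmin_r. }
      destruct (UC eps' He') as [dl [Hdl HU]].
      destruct (arch_inv (Rmin 1 (d * dl / 2))) as [N HN].
      { apply Rmin_case; [lra|]. apply Rdiv_lt_0_compat; nra. }
      exists N. intros n p Hn Hp.
      set (e := / (INR N + 1)). set (r := d + e).
      assert (He0 : 0 < e) by apply inv_pos.
      assert (He1 : e < 1) by (pose proof (Rmin_l 1 (d * dl / 2)); unfold e; lra).
      assert (He2 : e < d * dl / 2) by (pose proof (Rmin_r 1 (d * dl / 2)); unfold e; lra).
      assert (Hr : 0 < r) by (unfold r; lra).
      assert (Hn' : vnorm (hs n) <= r).
      { destruct (GS n) as [_ H]. pose proof (inv_mono N n Hn). unfold hs, r, e; lra. }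
      assert (Hp' : vnorm (hs p) <= r).
      { destruct (GS p) as [_ H]. pose proof (inv_mono N p Hp). unfold hs, r, e; lra. }
      apply Rnot_le_lt. intro Hge.
      set (u := vscal (/ r) (hs n)). set (v := vscal (/ r) (hs p)).
      assert (Hir : 0 < / r) by (apply Rinv_0_lt_compat; auto).
      assert (Nu : vnorm u <= 1).
      { unfold u. rewrite vnorm_scal, Rabs_right by lra.
        apply Rmult_le_reg_l with r; auto. rewrite <- Rmult_assoc, Rinv_r by lra. lra. }
      assert (Nv : vnorm v <= 1).
      { unfold v. rewrite vnorm_scal, Rabs_right by lra.
        apply Rmult_le_reg_l with r; auto. rewrite <- Rmult_assoc, Rinv_r by lra. lra. }
      assert (Nuv : eps' <= vnorm (vsub u v)).
      { replace (vsub u v) with (vscal (/ r) (vsub (hs n) (hs p)))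
          by (unfold u, v; vid (hs n) (hs p) (hs p); ring).
        rewrite vnorm_scal, Rabs_right by lra.
        assert (eps' <= eps / (d + 1)) by apply Rmin_l.
        assert (eps / (d + 1) <= / r * eps).
        { unfold Rdiv. rewrite Rmult_comm. apply Rmult_le_compat_r; [lra|].
          apply Rinv_le_contravar; unfold r; lra. }
        assert (/ r * eps <= / r * vnorm (vsub (hs n) (hs p))) by (apply Rmult_le_compat_l; lra).
        lra. }
      specialize (HU u v Nu Nv Nuv).
      set (mid := vscal (/2) (vadd (gs n) (gs p))).
      assert (Hmid : inZ mid) by (apply ZS, ZA; apply GS).
      replace (vscal (/ 2) (vadd u v)) with (vscal (/ r) (vadd f0 mid)) in HU
        by (unfold u, v, mid, hs; vid f0 (gs n) (gs p); field; lra).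
      rewrite vnorm_scal, Rabs_right in HU by lra.
      specialize (D1 mid Hmid).
      assert (/ r * d <= 1 - dl) by (pose proof (Rmult_le_compat_l (/ r) _ _ (Rlt_le _ _ Hir) D1); lra).
      assert (d <= r * (1 - dl)).
      { apply Rmult_le_reg_l with (/ r); auto. rewrite <- Rmult_assoc, Rinv_l by lra. lra. }
      assert (0 < / r * d) by (apply Rmult_lt_0_compat; lra).
      unfold r in *. nra.
    - destruct (arch_inv (eps / 2)) as [N HN]; [lra|]. exists N. intros n p Hn Hp.
      unfold vsub. eapply Rle_lt_trans; [apply vnorm_triangle|]. rewrite vnorm_opp.
      destruct (GS n) as [_ H1]. destruct (GS p) as [_ H2].
      pose proof (inv_mono N n Hn). pose proof (inv_mono N p Hp). unfold hs. rewrite <- D0 in *.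
      lra. }
  destruct (HC hs Cauchy) as [l Hl].
  exists (vsub l f0).
  assert (El : vadd f0 (vsub l f0) = l) by (vid l f0 f0; ring).
  rewrite El.
  assert (Zg : inZ (vsub l f0)).
  { intros i Hi. apply small_zero. intros e He.
    set (e' := e / (vnorm (x i) + 1)).
    assert (He' : 0 < e') by (unfold e'; apply Rdiv_lt_0_compat; pose proof (vnorm_nonneg E (x i)); lra).
    destruct (Hl e' He') as [N HN]. specialize (HN N (le_n N)).
    destruct (GS N) as [HZ _].
    replace (sip (vsub l f0) (x i)) with (sip (vadd (vsub l f0) (vscal (-1) (gs N))) (x i))
      by (rewrite sip_add, sip_scal, (HZ i Hi) by auto; ring).
    replace (vadd (vsub l f0) (vscal (-1) (gs N))) with (vscal (-1) (vsub (hs N) l))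
      by (unfold hs; vid l f0 (gs N); ring).
    eapply Rle_lt_trans; [apply sip_bound; auto|].
    rewrite vnorm_scal, Rabs_left by lra.
    pose proof (vnorm_nonneg E (x i)).
    assert (vnorm (x i) * vnorm (vsub (hs N) l) <= vnorm (x i) * e')
      by (apply Rmult_le_compat_l; lra).
    assert (vnorm (x i) * e' < e).
    { unfold e'. apply Rmult_lt_reg_r with (vnorm (x i) + 1); [lra|].
      field_simplify; lra. }
    lra. }
  assert (Nl : vnorm l <= d).
  { apply small_le. intros e He.
    destruct (Hl (e/2)) as [N1 HN1]; [lra|].
    destruct (arch_inv (e/2)) as [N2 HN2]; [lra|].
    set (n := Nat.max N1 N2).
    specialize (HN1 n ltac:(unfold n; lia)). pose proof (inv_mono N2 n ltac:(unfold n; lia)).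
    destruct (GS n) as [_ Hg].
    replace l with (vadd (hs n) (vscal (-1) (vsub (hs n) l))) at 1 by (vid (hs n) l l; ring).
    eapply Rle_lt_trans; [apply vnorm_triangle|]. rewrite vnorm_scal, Rabs_left by lra.
    unfold hs in *. lra. }
  split; [exact Zg|]. split.
  2: { eapply Rle_trans; [exact Nl|]. specialize (D1 vzero Z0). rewrite vadd_zero in D1. exact D1. }
  destruct (classic (l = vzero)) as [->|Hl0].
  { exists (fun _ => 0). intro y. unfold dual. rewrite sip_x0.
    rewrite (rsum_ext m _ (fun _ => 0)) by (intros; ring). rewrite rsum_zero; auto. }
  assert (Opt : forall z, inZ z -> 0 <= Dv l z).
  { intros z Hz. eapply deriv_le; [apply (affine_deriv (vnorm l) 0) | apply Dv_spec; auto | |].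
    - cbv beta. rewrite vscal0, vadd_zero. ring.
    - intros t Ht. cbv beta. replace (vadd l (vscal t z)) with (vadd f0 (vadd (vsub l f0) (vscal t z)))
        by (vid l f0 z; ring).
      pose proof (D1 _ (ZA _ _ Zg (ZS t z Hz))). lra. }
  apply (span_lemma E m (fun i => dual (x i))).
  - intro i. unfold dual. split; intros; [apply sip_add | apply sip_scal]; auto.
  - unfold dual. split; intros; [apply sip_add | apply sip_scal]; auto.
  - intros y Hy. unfold dual. rewrite sip_eq by auto.
    assert (Hz : inZ y) by exact Hy.
    pose proof (Opt y Hz). pose proof (Opt _ (ZS (-1) y Hz)).
    rewrite Dv_scal in H0 by auto.
    replace (Dv l y) with 0 by lra. ring.
Qed.
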